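(* Let $j\ge 3$ be an integer and let $\bar\alpha_j$ be the largest $\alpha\ge 0$ such that $\left(1-e^{-\alpha jx}\right)^{j-2}\left(1+(j-2)e^{-\alpha jx}\right)\le x$ for all $x\in(0,1]$. For $\alpha>0$ and an integer $k>\alpha j$, let $\delta=\alpha j/k$, $\lambda(z)=z^{j-1}$, $\rho(z)=z^{k-1}$, and define $x_0=\delta$ and $$x_{i+1}=\delta\Bigl(\lambda\bigl(1-\rho(1-x_i)\bigr)+\lambda'\bigl(1-\rho(1-x_i)\bigr)\bigl(\rho(1-x_i)-\rho\bigl(1-(1-\delta)\lambda(1-\rho(1-x_i))-x_i\bigr)\bigr)\Bigr),$$ where $\lambda'(z)=(j-1)z^{j-2}$. (a) If $\alpha<\bar\alpha_j$, there exists $K_1<\infty$ such that for all $k\ge K_1$, $x_i\to 0$ as $i\to\infty$. (b) If $\alpha>\bar\alpha_j$, there exists $K_2<\infty$ such that for all $k\ge K_2$, $x_i$ does not converge to $0$.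
   Context: The recursion is the message-based density evolution of the LM2 verification-decoding algorithm (LM2-MB) for a $(j,k)$-regular LDPC code on the $q$-ary symmetric channel with error probability $\delta$ (equivalently, reconstruction of a strictly sparse signal with fraction $\delta$ of nonzero entries); $x_i$ is the fraction of unverified messages, and $x_i\to 0$ corresponds to successful decoding with high probability as the block length tends to infinity. *)

(* Defs.v *)
From Stdlib Require Import Reals.
Open Scope R_scope.

Definition thr_lhs (j : nat) (a x : R) : R :=
  (1 - exp (- a * INR j * x)) ^ (j - 2) * (1 + (INR j - 2) * exp (- a * INR j * x)).

Definition thr_set (j : nat) (a : R) : Prop :=
  0 <= a /\ forall x : R, 0 < x <= 1 -> thr_lhs j a x <= x.

Definition is_alpha_bar (j : nat) (abar : R) : Prop :=
  thr_set j abar /\ forall a : R, thr_set j a -> a <= abar.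

Definition lam (j : nat) (z : R) : R := z ^ (j - 1).
Definition dlam (j : nat) (z : R) : R := INR (j - 1) * z ^ (j - 2).
Definition rho (k : nat) (z : R) : R := z ^ (k - 1).

Definition lm2_step (j k : nat) (delta x : R) : R :=
  let y := 1 - rho k (1 - x) in
  delta * (lam j y + dlam j y * (rho k (1 - x) - rho k (1 - (1 - delta) * lam j y - x))).

Definition delta_of (j k : nat) (a : R) : R := a * INR j / INR k.

Fixpoint lm2_seq (j k : nat) (a : R) (i : nat) : R :=
  match i with
  | O => delta_of j k a
  | S i' => lm2_step j k (delta_of j k a) (lm2_seq j k a i')
  end.

(* Main.v *)
Require Import Defs.
From Stdlib Require Import Reals Lra Lia Classical.
Open Scope R_scope.

Definition hh (n : nat) (r : R) : R := (1 - r) ^ n * (1 + INR n * r).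
Definition HH (n : nat) (y : R) : R := (INR n + 1) * y ^ n - INR n * y ^ (S n).

Lemma pow_le1 (y : R) (n : nat) : 0 <= y <= 1 -> y ^ n <= 1.
Proof. intros H. rewrite <- (pow1 n). apply pow_incr. lra. Qed.

Lemma pow_Sle (y : R) (n : nat) : 0 <= y <= 1 -> y ^ S n <= y ^ n.
Proof. intros H. simpl. assert (0 <= y ^ n) by (apply pow_le; lra). nra. Qed.

Lemma exp_le' (x y : R) : x <= y -> exp x <= exp y.
Proof. intros [H|H]. left; now apply exp_increasing. subst; lra. Qed.

Lemma ln_le' (x y : R) : 0 < x -> x <= y -> ln x <= ln y.
Proof. intros Hx [H|H]. left; now apply ln_increasing. subst; lra. Qed.

Lemma HH_deriv (n : nat) (c : R) :
  derivable_pt_lim (HH n) c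
    ((INR n + 1) * (INR n * c ^ Init.Nat.pred n) - INR n * (INR (S n) * c ^ Init.Nat.pred (S n))).
Proof.
  change (HH n) with (minus_fct (mult_real_fct (INR n + 1) (fun y => y ^ n))
                                (mult_real_fct (INR n) (fun y => y ^ S n))).
  apply derivable_pt_lim_minus; apply derivable_pt_lim_scal; apply derivable_pt_lim_pow.
Qed.

Lemma HH_mono (n : nat) (y1 y2 : R) : 0 <= y1 -> y1 <= y2 -> y2 <= 1 -> HH n y1 <= HH n y2.
Proof.
  intros H1 H2 H3. destruct (Req_dec y1 y2) as [E|E]. subst; lra.
  destruct (MVT_cor2 (HH n) _ y1 y2 ltac:(lra) (fun c _ => HH_deriv n c)) as [c [Ec Hc]].
  assert (D : 0 <= (INR n + 1) * (INR n * c ^ Init.Nat.pred n) - INR n * (INR (S n) * c ^ Init.Nat.pred (S n))).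
  { rewrite S_INR. simpl Init.Nat.pred.
    replace ((INR n + 1) * (INR n * c ^ Init.Nat.pred n) - INR n * ((INR n + 1) * c ^ n))
      with ((INR n + 1) * INR n * (c ^ Init.Nat.pred n - c ^ n)) by ring.
    apply Rmult_le_pos. apply Rmult_le_pos. pose proof (pos_INR n); lra. apply pos_INR.
    destruct n as [|n']. simpl; lra. simpl Init.Nat.pred.
    pose proof (pow_Sle c n' ltac:(lra)). lra. }
  nra.
Qed.

Lemma hh_HH (n : nat) (r : R) : hh n r = HH n (1 - r).
Proof. unfold hh, HH. simpl. ring. Qed.

Lemma hh_mono (n : nat) (r1 r2 : R) : 0 <= r1 -> r1 <= r2 -> r2 <= 1 -> hh n r2 <= hh n r1.
Proof. intros. rewrite !hh_HH. apply HH_mono; lra. Qed.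

Lemma thr_eq (n : nat) (a x : R) :
  thr_lhs (S (S n)) a x = hh n (exp (- a * INR (S (S n)) * x)).
Proof.
  unfold thr_lhs, hh. replace (S (S n) - 2)%nat with n by lia.
  replace (INR (S (S n)) - 2) with (INR n) by (rewrite !S_INR; ring). reflexivity.
Qed.

Lemma step_eq (n m : nat) (d x : R) :
  lm2_step (S (S n)) (S m) d x =
  d * (hh n ((1 - x) ^ m) - INR (S n) * (1 - (1 - x) ^ m) ^ n *
        (1 - (1 - d) * (1 - (1 - x) ^ m) ^ S n - x) ^ m).
Proof.
  unfold lm2_step, lam, dlam, rho, hh.
  replace (S (S n) - 1)%nat with (S n) by lia.
  replace (S (S n) - 2)%nat with n by lia.
  replace (S m - 1)%nat with m by lia.
  cbv zeta. rewrite S_INR. simpl. ring.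
Qed.

Lemma a_step (n m : nat) (abar a d x : R) :
  (1 <= n)%nat -> (1 <= m)%nat -> 0 < a -> 0 < abar -> thr_set (S (S n)) abar ->
  d = a * INR (S (S n)) / INR (S m) -> d < 1 ->
  a / ((1 - d) * abar) <= 1 -> 0 <= x <= d ->
  0 <= lm2_step (S (S n)) (S m) d x <= a / ((1 - d) * abar) * x.
Proof.
  intros Hn Hm Ha Hab Hthr Hd Hd1 Hc Hx.
  set (J := INR (S (S n))). set (K := INR (S m)).
  assert (HJ : 0 < J) by (unfold J; apply lt_0_INR; lia).
  assert (HK : 0 < K) by (unfold K; apply lt_0_INR; lia).
  assert (Hd0 : 0 < d) by (rewrite Hd; apply Rdiv_lt_0_compat; [apply Rmult_lt_0_compat|]; assumption).
  rewrite step_eq.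
  set (r := (1 - x) ^ m).
  assert (Hr0 : 0 < r) by (unfold r; apply pow_lt; lra).
  assert (Hr1 : r <= 1) by (unfold r; apply pow_le1; lra).
  set (y := 1 - r).
  assert (Hy : 0 <= y <= 1) by (unfold y; lra).
  set (b := 1 - (1 - d) * y ^ S n - x).
  assert (Hyn1 : y ^ S n <= 1) by (apply pow_le1; lra).
  assert (Hyn0 : 0 <= y ^ S n) by (apply pow_le; lra).
  assert (Hb : 0 <= b <= 1 - x) by (unfold b; nra).
  assert (Hs : 0 <= b ^ m <= r) by (split; [apply pow_le; lra | unfold r; apply pow_incr; lra]).
  assert (Hyn : 0 <= y ^ n) by (apply pow_le; lra).
  assert (HSn : 0 < INR (S n)) by (apply lt_0_INR; lia).
  assert (Hhh : hh n r = y ^ n * (y + INR (S n) * r)).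
  { unfold hh, y. rewrite S_INR. ring. }
  assert (Hup : d * (hh n r - INR (S n) * y ^ n * b ^ m) <= d * hh n r).
  { apply Rmult_le_compat_l. lra. assert (0 <= INR (S n) * y ^ n * b ^ m).
    apply Rmult_le_pos. apply Rmult_le_pos; lra. lra. lra. }
  split.
  - apply Rmult_le_pos. lra. rewrite Hhh.
    replace (y ^ n * (y + INR (S n) * r) - INR (S n) * y ^ n * b ^ m)
      with (y ^ n * (y + INR (S n) * (r - b ^ m))) by ring.
    apply Rmult_le_pos. lra. nra.
  - destruct (Req_dec x 0) as [E|E].
    + assert (r = 1) by (unfold r; rewrite E, Rminus_0_r; apply pow1).
      assert (hh n r = 0).
      { rewrite Hhh. assert (y = 0) by (unfold y; lra). rewrite H0.
        destruct n. lia. simpl. ring. }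
      rewrite H0, Rmult_0_r in Hup. rewrite E, Rmult_0_r, H0. exact Hup.
    + assert (Hxp : 0 < x) by lra.
      assert (Hr1' : r < 1).
      { unfold r. destruct m. lia. simpl. assert (0 <= (1 - x) ^ m) by (apply pow_le; lra).
        assert ((1-x)^m <= 1) by (apply pow_le1; lra). nra. }
      set (t := - ln r).
      assert (Ht0 : 0 < t).
      { unfold t. pose proof (ln_increasing r 1 Hr0 Hr1'). rewrite ln_1 in H. lra. }
      assert (Hlnx : - ln (1 - x) <= x / (1 - x)).
      { rewrite <- ln_Rinv by lra.
        rewrite <- (ln_exp (x / (1 - x))). apply ln_le'.
        apply Rinv_0_lt_compat; lra.
        pose proof (exp_ineq1_le (x / (1 - x))).
        replace (/ (1 - x)) with (1 + x / (1 - x)) by (field; lra). lra. }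
      assert (Ht : t * (1 - x) <= INR m * x).
      { unfold t, r. rewrite ln_pow by lra.
        assert (0 <= INR m) by apply pos_INR.
        assert (- (INR m * ln (1 - x)) <= INR m * (x / (1 - x))).
        { replace (- (INR m * ln (1 - x))) with (INR m * (- ln (1 - x))) by ring.
          apply Rmult_le_compat_l; lra. }
        assert (INR m * (x / (1 - x)) * (1 - x) = INR m * x) by (field; lra).
        nra. }
      assert (Ht2 : t * (1 - d) <= K * x).
      { unfold K. rewrite S_INR. nra. }
      set (x2 := t / (abar * J)).
      assert (Hx2 : 0 < x2) by (unfold x2; apply Rdiv_lt_0_compat; nra).
      assert (Hkey : d * x2 <= a / ((1 - d) * abar) * x).
      { unfold x2.
        replace (d * (t / (abar * J))) with (a / abar * (t / K)) by (rewrite Hd; fold J K; field; lra).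
        replace (a / ((1 - d) * abar) * x) with (a / abar * (x / (1 - d))) by (field; lra).
        apply Rmult_le_compat_l. apply Rlt_le, Rdiv_lt_0_compat; lra.
        apply (Rmult_le_reg_r (K * (1 - d))). nra.
        replace (t / K * (K * (1 - d))) with (t * (1 - d)) by (field; lra).
        replace (x / (1 - d) * (K * (1 - d))) with (K * x) by (field; lra). lra. }
      assert (Hx21 : x2 <= 1).
      { assert (d * x2 <= d) by nra. nra. }
      destruct Hthr as [_ Hthr]. specialize (Hthr x2 (conj Hx2 Hx21)).
      rewrite thr_eq in Hthr. fold J in Hthr.
      replace (- abar * J * x2) with (ln r) in Hthr by (unfold x2, t; field; nra).
      rewrite exp_ln in Hthr by lra.
      nra.
Qed.

Lemma exp_pow' (z : R) (m : nat) : exp z ^ m = exp (INR m * z).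
Proof.
  induction m. simpl. rewrite Rmult_0_l, exp_0. reflexivity.
  rewrite S_INR. simpl. rewrite IHm, <- exp_plus. f_equal. ring.
Qed.

Lemma b_step (n m : nat) (a a' d p x : R) :
  (1 <= n)%nat -> 0 < a -> 0 <= a' ->
  d = a * INR (S (S n)) / INR (S m) -> d <= 1/2 ->
  a' * INR (S m) <= a * INR m -> 0 < p <= 1 ->
  p < thr_lhs (S (S n)) a' p ->
  INR (S n) * (1 - (1 - exp (- a' * INR (S (S n)) * p)) ^ S n / 2) ^ m
     < thr_lhs (S (S n)) a' p - p ->
  d * p <= x <= d ->
  d * p <= lm2_step (S (S n)) (S m) d x <= d.
Proof.
  intros Hn Ha Ha' Hd Hd2 Ham Hp Hthr Hq Hx.
  set (J := INR (S (S n))) in *. set (K := INR (S m)) in *.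
  assert (HJ : 0 < J) by (unfold J; apply lt_0_INR; lia).
  assert (HK : 0 < K) by (unfold K; apply lt_0_INR; lia).
  assert (Hd0 : 0 < d) by (rewrite Hd; apply Rdiv_lt_0_compat; [apply Rmult_lt_0_compat|]; assumption).
  set (e0 := exp (- a' * J * p)) in *.
  set (T := thr_lhs (S (S n)) a' p) in *.
  assert (HT : T = hh n e0) by (unfold T, e0, J; apply thr_eq).
  assert (He0 : 0 < e0 <= 1).
  { split. apply exp_pos. rewrite <- exp_0. apply exp_le'.
    assert (0 <= a' * J * p) by (apply Rmult_le_pos; [apply Rmult_le_pos|]; lra). lra. }
  rewrite step_eq.
  set (r := (1 - x) ^ m).
  assert (Hm0 : 0 <= INR m) by apply pos_INR.
  assert (Hr0 : 0 <= r) by (unfold r; apply pow_le; lra).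
  assert (Hre : r <= e0).
  { unfold r. apply Rle_trans with (exp (- x) ^ m).
    apply pow_incr. pose proof (exp_ineq1_le (- x)). lra.
    rewrite exp_pow'. unfold e0. apply exp_le'.
    assert (INR m * d >= a' * J).
    { rewrite Hd. apply Rle_ge.
      replace (INR m * (a * J / K)) with (J * (a * INR m) / K) by (field; lra).
      apply (Rmult_le_reg_r K). lra.
      replace (J * (a * INR m) / K * K) with (J * (a * INR m)) by (field; lra). nra. }
    nra. }
  set (y := 1 - r).
  set (y0 := 1 - e0) in *.
  assert (Hy : y0 <= y <= 1) by (unfold y, y0; lra).
  assert (Hy00 : 0 <= y0) by (unfold y0; lra).
  set (b := 1 - (1 - d) * y ^ S n - x).
  assert (Hyn1 : y ^ S n <= 1) by (apply pow_le1; lra).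
  assert (Hyn0 : y0 ^ S n <= y ^ S n) by (apply pow_incr; lra).
  assert (Hy0n : 0 <= y0 ^ S n) by (apply pow_le; lra).
  assert (Hb : 0 <= b <= 1 - y0 ^ S n / 2) by (unfold b; nra).
  assert (Hs : 0 <= b ^ m <= (1 - y0 ^ S n / 2) ^ m)
    by (split; [apply pow_le; lra | apply pow_incr; lra]).
  assert (Hyn : 0 <= y ^ n <= 1) by (split; [apply pow_le | apply pow_le1]; lra).
  assert (HSn : 0 < INR (S n)) by (apply lt_0_INR; lia).
  assert (Hh1 : T <= hh n r) by (rewrite HT; apply hh_mono; lra).
  assert (Hh2 : hh n r <= 1).
  { replace 1 with (hh n 0) by (unfold hh; rewrite Rminus_0_r, pow1; ring).
    apply hh_mono; lra. }
  assert (HX : 0 <= INR (S n) * y ^ n * b ^ m <= INR (S n) * (1 - y0 ^ S n / 2) ^ m).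
  { split. apply Rmult_le_pos. apply Rmult_le_pos; lra. lra.
    rewrite Rmult_assoc. apply Rmult_le_compat_l. lra. nra. }
  split; nra.
Qed.

Theorem theorem4 (j : nat) (hj : (3 <= j)%nat) (abar : R)
  (habar : is_alpha_bar j abar) :
  (forall a : R, 0 < a -> a < abar ->
     exists K1 : nat, forall k : nat, (K1 <= k)%nat -> a * INR j < INR k ->
       Un_cv (lm2_seq j k a) 0) /\
  (forall a : R, abar < a ->
     exists K2 : nat, forall k : nat, (K2 <= k)%nat -> a * INR j < INR k ->
       ~ Un_cv (lm2_seq j k a) 0).
Proof.
  destruct j as [|[|n]]; [lia|lia|].
  assert (Hn : (1 <= n)%nat) by lia.
  destruct habar as [Hthr Hmax].
  assert (HJ : 0 < INR (S (S n))) by (apply lt_0_INR; lia).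
  split.
  - intros a Ha Hab.
    destruct (INR_archimed 1 (a * INR (S (S n)) * abar / (abar - a)) ltac:(lra)) as [N HN].
    exists (N + 2)%nat. intros k Hk Hak.
    destruct k as [|m]. lia. assert (Hm : (1 <= m)%nat) by lia.
    assert (HNk : INR N <= INR (S m)) by (apply le_INR; lia).
    set (d := delta_of (S (S n)) (S m) a).
    assert (HK : 0 < INR (S m)) by (apply lt_0_INR; lia).
    assert (Hd : d = a * INR (S (S n)) / INR (S m)) by reflexivity.
    assert (Hd0 : 0 < d) by (rewrite Hd; apply Rdiv_lt_0_compat; [apply Rmult_lt_0_compat|]; assumption).
    assert (Hd1 : d < 1).
    { rewrite Hd. apply (Rmult_lt_reg_r (INR (S m))). lra.
      replace (a * INR (S (S n)) / INR (S m) * INR (S m)) with (a * INR (S (S n))) by (field; lra). lra. }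
    set (c := a / ((1 - d) * abar)).
    assert (Hc : 0 < c < 1).
    { unfold c. split. apply Rdiv_lt_0_compat. lra. apply Rmult_lt_0_compat; lra.
      apply (Rmult_lt_reg_r ((1 - d) * abar)). apply Rmult_lt_0_compat; lra.
      replace (a / ((1 - d) * abar) * ((1 - d) * abar)) with a by (field; lra).
      assert (d * abar < abar - a).
      { rewrite Hd. apply (Rmult_lt_reg_r (INR (S m))). lra.
        replace (a * INR (S (S n)) / INR (S m) * abar * INR (S m)) with (a * INR (S (S n)) * abar) by (field; lra).
        assert (a * INR (S (S n)) * abar / (abar - a) < INR (S m)) by lra.
        apply (Rmult_lt_compat_r (abar - a)) in H. 2: lra.
        replace (a * INR (S (S n)) * abar / (abar - a) * (abar - a)) with (a * INR (S (S n)) * abar) in H by (field; lra).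
        lra. }
      nra. }
    assert (Hind : forall i, 0 <= lm2_seq (S (S n)) (S m) a i <= c ^ i * d).
    { induction i.
      - simpl. fold d. lra.
      - simpl lm2_seq. fold d.
        assert (Hci : c ^ i <= 1) by (apply pow_le1; lra).
        assert (0 <= c ^ i) by (apply pow_le; lra).
        assert (lm2_seq (S (S n)) (S m) a i <= d) by nra.
        destruct (a_step n m abar a d (lm2_seq (S (S n)) (S m) a i) Hn Hm Ha ltac:(lra) Hthr Hd Hd1
                   ltac:(fold c; lra) ltac:(lra)) as [L U].
        fold c in U. split. lra. simpl. nra. }
    intros eps Heps.
    destruct (pow_lt_1_zero c ltac:(rewrite Rabs_right; lra) (eps / d) ltac:(apply Rdiv_lt_0_compat; lra))
      as [N1 HN1].
    exists N1. intros i Hi. unfold R_dist. rewrite Rminus_0_r.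
    specialize (HN1 i Hi). specialize (Hind i).
    assert (0 <= c ^ i) by (apply pow_le; lra).
    rewrite Rabs_right in HN1 by lra. rewrite Rabs_right by lra.
    assert (c ^ i * d < eps / d * d) by (apply Rmult_lt_compat_r; lra).
    replace (eps / d * d) with eps in H0 by (field; lra). lra.
  - intros a Hab.
    assert (Hab0 : 0 <= abar) by (destruct Hthr; lra).
    set (a' := (a + abar) / 2).
    assert (Hnot : ~ thr_set (S (S n)) a') by (intro H; specialize (Hmax a' H); unfold a' in *; lra).
    assert (Ha' : 0 < a') by (unfold a'; lra).
    assert (Hex : exists p, 0 < p <= 1 /\ p < thr_lhs (S (S n)) a' p).
    { apply NNPP. intro H. apply Hnot. split. lra. intros x Hx.
      apply Rnot_lt_le. intro H'. apply H. exists x. tauto. }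
    destruct Hex as [p [Hp Hpt]].
    set (J := INR (S (S n))) in *.
    set (y0 := 1 - exp (- a' * J * p)).
    assert (Hy0 : 0 < y0 <= 1).
    { unfold y0. split.
      assert (exp (- a' * J * p) < 1).
      { rewrite <- exp_0. apply exp_increasing.
        assert (0 < a' * J * p) by (apply Rmult_lt_0_compat; [apply Rmult_lt_0_compat|]; lra). lra. }
      lra. pose proof (exp_pos (- a' * J * p)). lra. }
    set (q := 1 - y0 ^ S n / 2).
    assert (Hq : 1/2 <= q < 1).
    { unfold q. assert (0 < y0 ^ S n) by (apply pow_lt; lra).
      assert (y0 ^ S n <= 1) by (apply pow_le1; lra). lra. }
    assert (HSn : 0 < INR (S n)) by (apply lt_0_INR; lia).
    destruct (pow_lt_1_zero q ltac:(rewrite Rabs_right; lra)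
                ((thr_lhs (S (S n)) a' p - p) / INR (S n)) ltac:(apply Rdiv_lt_0_compat; lra))
      as [N1 HN1].
    destruct (INR_archimed 1 (2 * a * J + a' / (a - a')) ltac:(lra)) as [N HN].
    exists (N + N1 + 1)%nat. intros k Hk Hak.
    destruct k as [|m]. lia.
    assert (HNm : INR N <= INR m) by (apply le_INR; lia).
    set (d := delta_of (S (S n)) (S m) a).
    assert (HK : 0 < INR (S m)) by (apply lt_0_INR; lia).
    assert (Hd : d = a * J / INR (S m)) by reflexivity.
    assert (Ha : 0 < a) by lra.
    assert (Hd0 : 0 < d) by (rewrite Hd; apply Rdiv_lt_0_compat; [apply Rmult_lt_0_compat|]; assumption).
    assert (Haa : 0 < a - a') by (unfold a'; lra).
    assert (Hda : 0 <= a' / (a - a')) by (apply Rlt_le, Rdiv_lt_0_compat; lra).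
    assert (HaJ : 0 < a * J) by nra.
    assert (Hd2 : d <= 1/2).
    { rewrite Hd. apply (Rmult_le_reg_r (INR (S m))). lra.
      replace (a * J / INR (S m) * INR (S m)) with (a * J) by (field; lra).
      rewrite S_INR. lra. }
    assert (Ham : a' * INR (S m) <= a * INR m).
    { rewrite S_INR.
      assert (a' / (a - a') * (a - a') = a') by (field; lra).
      assert (a' / (a - a') <= INR m) by lra. nra. }
    assert (Hqm : INR (S n) * q ^ m < thr_lhs (S (S n)) a' p - p).
    { specialize (HN1 m ltac:(lia)). rewrite Rabs_right in HN1.
      apply (Rmult_lt_compat_l (INR (S n))) in HN1. 2: lra.
      replace (INR (S n) * ((thr_lhs (S (S n)) a' p - p) / INR (S n))) with
        (thr_lhs (S (S n)) a' p - p) in HN1 by (field; lra). lra.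
      apply Rle_ge, pow_le; lra. }
    assert (Hind : forall i, d * p <= lm2_seq (S (S n)) (S m) a i <= d).
    { induction i.
      - simpl. fold d. nra.
      - simpl lm2_seq. fold d.
        apply (b_step n m a a' d p); try assumption; lra. }
    intro Hcv. destruct (Hcv (d * p) ltac:(nra)) as [N2 HN2].
    specialize (HN2 N2 (Nat.le_refl _)). specialize (Hind N2).
    unfold R_dist in HN2. rewrite Rminus_0_r, Rabs_right in HN2 by nra. lra.
Qed.
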